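(* For integers $0\le m<n$, the probability that the boundary Markov chain started at $M_0=n$ ever hits $m$ is \[ 1-\frac{(n)_{m+1}}{(n+1/2)_{m+1}} . \] In particular the probability of ever hitting $0$ from $n$ is $\frac{1}{2n+1}$, so the chain is transient.
   Context: The boundary Markov chain is the Markov chain $(M_n)_{n\ge0}$ on $\{0,1,2,\dots\}$ with $M_{n+1}=M_n+X_n$. Given $M_n=m$, its step $X_n$ has the law \[ \mathbb P(X_n=1\mid M_n=m)=\frac{2m+3}{3m+3}. \] For $1\le k\le m$, \[ \mathbb P(X_n=-k\mid M_n=m)=\frac{2(2k-2)!}{(k-1)!(k+1)!}\cdot\frac{m!^2(2m-2k+1)!}{(m-k)!^2(2m+1)!}. \] The descending factorial is $(x)_k=x(x-1)\cdots(x-k+1)=\Gamma(x+1)/\Gamma(x-k+1)$. *)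

(* Defs.v *)
From HB Require Import structures.
From mathcomp Require Import all_boot all_order all_algebra.
From mathcomp Require Import all_classical all_reals all_analysis.
Set Implicit Arguments. Unset Strict Implicit. Unset Printing Implicit Defensive.
Import Order.TTheory GRing.Theory Num.Theory.
Local Open Scope ring_scope.

Section BoundaryChain.
Variable R : realType.

Definition falling (x : R) (k : nat) : R := \prod_(i < k) (x - i%:R).

Definition p_up (m : nat) : R := (2 * m + 3)%N%:R / (3 * m + 3)%N%:R.

(* P(X = -k | M = m), for 1 <= k <= m. *)
Definition p_down (m k : nat) : R :=
  (2 * (2 * k - 2)`!)%N%:R / ((k - 1)`! * (k + 1)`!)%N%:R
  * ((m`! ^ 2 * (2 * m - 2 * k + 1)`!)%N%:R
     / (((m - k)`! ^ 2) * (2 * m + 1)`!)%N%:R).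

(* hit_within m k x = P_x(the chain hits m within k steps),
   i.e. P(exists j <= k, M_j = m | M_0 = x), computed by first-step analysis:
   from x the chain moves to x+1 or to x-j for 1 <= j <= x. *)
Fixpoint hit_within (m k x : nat) {struct k} : R :=
  if x == m then 1 else
  match k with
  | 0 => 0
  | k'.+1 => p_up x * hit_within m k' x.+1
             + \sum_(1 <= j < x.+1) p_down x j * hit_within m k' (x - j)
  end.

(* return_within k x = P_x(the chain returns to x at some time in 1..k+1). *)
Definition return_within (k x : nat) : R :=
  p_up x * hit_within x k x.+1
  + \sum_(1 <= j < x.+1) p_down x j * hit_within x k (x - j).

End BoundaryChain.

(* Main.v *)
Require Import Defs.
From HB Require Import structures.
From mathcomp Require Import all_boot all_order all_algebra.
From mathcomp Require Import all_classical all_reals all_analysis.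
From mathcomp Require Import ring lra zify.
Import Order.TTheory GRing.Theory Num.Theory.
Import numFieldNormedType.Exports.
Local Open Scope classical_set_scope.
Local Open Scope ring_scope.

Section S.
Variable R : realType.

Lemma factr_neq0 n : (n`!)%:R != 0 :> R.
Proof. by rewrite pnatr_eq0 -lt0n fact_gt0. Qed.

Ltac neq0 := repeat (apply/andP; split); first [ apply: factr_neq0 | apply: lt0r_neq0; lra | done ].

Ltac normr := rewrite ?(natrD, natrM, natrX); rewrite -?natr1.

Lemma pdown1 y : p_down R y.+1 1 = y.+1%:R / (2 * (2 * y + 3))%:R.
Proof.
rewrite /p_down.
have -> : (2 * 1 - 2 = 0)%N by [].
have -> : (1 - 1 = 0)%N by [].
have -> : (1 + 1 = 2)%N by [].
have -> : (2 * y.+1 - 2 * 1 + 1 = (2*y).+1)%N by lia.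
have -> : (2 * y.+1 + 1 = (2*y).+3)%N by lia.
have -> : (y.+1 - 1 = y)%N by lia.
rewrite !factS fact0 !natrM -!natr1 ?natrM ?natrD.
have := factr_neq0 y; have := factr_neq0 (2*y).+1.
rewrite -!natr1.
move=> h1 h2. have y0 := ler0n R y. field; neq0.
Qed.

Lemma pdown_rec k d :
  p_down R (k.+2 + d) k.+2 * (k.+3%:R * (2*d+3)%:R)
  = p_down R (k.+2 + d) k.+1 * ((2*k+1)%:R * d.+1%:R).
Proof.
rewrite /p_down.
have -> : (2 * k.+2 - 2 = (2*k).+2)%N by lia.
have -> : (k.+2 - 1 = k.+1)%N by lia.
have -> : (k.+2 + 1 = k.+3)%N by lia.
have -> : (k.+2 + d - k.+2 = d)%N by lia.
have -> : (2 * (k.+2 + d) - 2 * k.+2 + 1 = (2*d).+1)%N by lia.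
have -> : (2 * k.+1 - 2 = (2*k))%N by lia.
have -> : (k.+1 - 1 = k)%N by lia.
have -> : (k.+1 + 1 = k.+2)%N by lia.
have -> : (k.+2 + d - k.+1 = d.+1)%N by lia.
have -> : (2 * (k.+2 + d) - 2 * k.+1 + 1 = (2*d).+3)%N by lia.
rewrite (factS (2*k).+1) (factS (2*k)) (factS k) (factS k.+2) (factS (2*d).+2) (factS (2*d).+1) (factS d).
move: (fact_gt0 (k.+2 + d)) (fact_gt0 (2 * (k.+2 + d) + 1)) (fact_gt0 (2*k)) (fact_gt0 k)
  (fact_gt0 k.+2) (fact_gt0 (2*d).+1) (fact_gt0 d).
move: ((k.+2 + d)`!) ((2 * (k.+2 + d) + 1)`!) ((2*k)`!) (k`!) (k.+2`!) ((2*d).+1`!) (d`!).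
move=> f1 f2 f3 f4 f5 f6 f7; rewrite -!(ltr0n R) => *.
rewrite !natrM -!natr1 ?natrM ?natrD.
have k0 := ler0n R k. have d0 := ler0n R d. field; neq0.
Qed.

Lemma solve_eq {a b c : R} : c != 0 -> a * c = b -> a = b / c.
Proof. by move=> c0 <-; rewrite mulfK. Qed.

Lemma tele n K : (K.+1 <= n)%N ->
  \sum_(1 <= k < K.+2) p_down R n k
  = n%:R / (3*n+3)%:R - p_down R n K.+1 * ((n - K.+1)%:R * (2*K+1)%:R) / (3*n+3)%:R.
Proof.
elim: K => [|K IH] hn.
  rewrite big_nat1.
  case: n hn => [//|y] _.
  rewrite pdown1 subSS subn0.
  have y0 := ler0n R y.
  rewrite !natrM !natrD. field; neq0.
rewrite big_nat_recr //= IH; last by lia.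
set d := (n - K.+2)%N.
have hd : n = (K.+2 + d)%N by rewrite /d; lia.
clearbody d; subst n.
have -> : (K.+2 + d - K.+1 = d.+1)%N by lia.
rewrite (solve_eq _ (pdown_rec K d)); last first.
  have K0 := ler0n R K; have d0 := ler0n R d. normr. neq0.
have K0 := ler0n R K; have d0 := ler0n R d.
normr. field; neq0.
Qed.

Lemma sumP x : p_up R x + \sum_(1 <= j < x.+1) p_down R x j = 1.
Proof.
case: x => [|y].
  by rewrite big_geq // addr0 /p_up divff // pnatr_eq0.
rewrite tele // subnn /p_up.
have y0 := ler0n R y.
normr. field; neq0.
Qed.

Lemma fallingS (z : R) j : falling z j.+1 = falling z j * (z - j%:R).
Proof. by rewrite /falling big_ord_recr. Qed.

Lemma falling0 (z : R) : falling z 0 = 1.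
Proof. by rewrite /falling big_ord0. Qed.

Lemma fallS (z : R) j : falling (z+1) j * (z + 1 - j%:R) = falling z j * (z + 1).
Proof.
elim: j => [|j IH]; first by rewrite !falling0 subr0.
rewrite !fallingS.
have -> : z + 1 - j.+1%:R = z - j%:R by rewrite -natr1; ring.
rewrite IH; ring.
Qed.

Lemma falling_zero (y j : nat) : (y < j)%N -> falling (y%:R : R) j = 0.
Proof.
elim: j => [//|j IH] h; rewrite fallingS.
case: (ltnP y j) => h2; first by rewrite IH // mul0r.
have -> : y = j by lia.
by rewrite subrr mulr0.
Qed.

Lemma half_ne (y i : nat) : y%:R + 2^-1 - i%:R != 0 :> R.
Proof.
apply/negP => /eqP h.
have : (2*y+1)%:R - (2*i)%:R = 2 * (y%:R + 2^-1 - i%:R) :> R by normr; field.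
rewrite h mulr0 => /eqP; rewrite subr_eq0 eqr_nat => /eqP; lia.
Qed.

Lemma half_neq0 (y j : nat) : falling (y%:R + 2^-1 : R) j != 0.
Proof.
elim: j => [|j IH]; first by rewrite falling0 oner_neq0.
by rewrite fallingS mulf_neq0 // half_ne.
Qed.

Definition phi j (y : nat) : R := falling (y%:R : R) j / falling (y%:R + 2^-1) j.

Lemma phiS j y : phi j y.+1 * ((y%:R + 1 - j%:R) * (y%:R + 2^-1 + 1))
   = phi j y * ((y%:R + 1) * (y%:R + 2^-1 + 1 - j%:R)).
Proof.
rewrite /phi -natr1 [_ + 1 + 2^-1]addrAC.
have A1 := fallS y%:R j. have A2 := fallS (y%:R + 2^-1) j.
have nz0 := half_neq0 y j.
have nz1 : falling (y%:R + 2^-1 + 1 : R) j != 0.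
  by have := half_neq0 y.+1 j; rewrite -natr1 [_ + 1 + 2^-1]addrAC.
have nzj : y%:R + 2^-1 + 1 - j%:R != 0 :> R.
  by have := half_ne y.+1 j; rewrite -natr1 [_ + 1 + 2^-1]addrAC.
have y0 := ler0n R y.
move: A1 A2 nz0 nz1.
move: (falling y%:R j) (falling (y%:R+1) j) (falling (y%:R + 2^-1) j) (falling (y%:R + 2^-1 + 1) j).
move=> F0 F1 G0 G1 A1 A2 nz0 nz1.
have nz3 : y%:R + 2^-1 + 1 != 0 :> R by apply: lt0r_neq0; lra.
set c := (y%:R + 2^-1 + 1 - j%:R : R) in nzj A2 *. clearbody c.
set e := (y%:R + 2^-1 + 1 : R) in nz3 A2 *. clearbody e.
set a := (y%:R + 1 - j%:R : R) in A1 *. clearbody a.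
rewrite (solve_eq nzj A2).
have -> : F1 / (G0 * e / c) * (a * e) = (F1 * a) * c / G0.
  by field; rewrite nz0 nz3 nzj.
rewrite A1. field. by rewrite nz0.
Qed.

Lemma phi_solve j y : phi j y = phi j y.+1 * ((y%:R + 1 - j%:R) * (y%:R + 2^-1 + 1))
   / ((y%:R + 1) * (y%:R + 2^-1 + 1 - j%:R)).
Proof.
apply: solve_eq; last by rewrite (phiS j y).
apply: mulf_neq0; first by apply: lt0r_neq0; have := ler0n R y; lra.
by have := half_ne y.+1 j; rewrite -natr1 [_ + 1 + 2^-1]addrAC.
Qed.

Lemma phiU j d : p_up R (j + d) * phi j (j + d).+1 = phi j (j + d) * p_up R d.
Proof.
rewrite (phi_solve j (j+d)) /p_up.
have j0 := ler0n R j; have d0 := ler0n R d.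
move: (phi j (j+d).+1) => P.
normr. field; neq0.
Qed.

Lemma phiV j k e : p_down R (j + k.+1 + e) k.+1 * phi j (j + e)
   = phi j (j + k.+1 + e) * p_down R (k.+1 + e) k.+1.
Proof.
have j0 := ler0n R j.
elim: k e => [|k IH] e.
  have -> : (j + 1 + e = (j+e).+1)%N by lia.
  have -> : (1 + e = e.+1)%N by lia.
  rewrite !pdown1 (phi_solve j (j+e)).
  have e0 := ler0n R e.
  move: (phi j (j+e).+1) => P.
  normr. field; neq0.
have := IH e.+1.
have -> : (j + k.+2 + e = k.+2 + (j+e))%N by lia.
have -> : (j + k.+1 + e.+1 = k.+2 + (j+e))%N by lia.
have -> : (k.+1 + e.+1 = k.+2 + e)%N by lia.
have -> : (j + e.+1 = (j+e).+1)%N by lia.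
have e0 := ler0n R e; have k0 := ler0n R k.
move=> IH2.
rewrite (phi_solve j (j+e)).
have nz1 : (k.+3%:R * (2 * (j + e) + 3)%:R) != 0 :> R by normr; neq0.
have nz2 : (k.+3%:R * (2 * e + 3)%:R) != 0 :> R by normr; neq0.
rewrite (solve_eq nz1 (pdown_rec k (j+e))) (solve_eq nz2 (pdown_rec k e)).
move: IH2.
move: (p_down R (k.+2 + (j + e)) k.+1) (phi j (j + e).+1) (phi j (k.+2 + (j + e))) (p_down R (k.+2 + e) k.+1).
move=> P1 F1 Fx Q1 IH2.
apply/eqP; rewrite -subr_eq0; apply/eqP.
transitivity ((P1 * F1 - Fx * Q1) * (((2*k+1)%:R * e.+1%:R) / (k.+3%:R * (2*e+3)%:R))).
  normr; field; neq0.
by rewrite IH2 subrr mul0r.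
Qed.

Definition E (f : nat -> R) (x : nat) : R :=
  p_up R x * f x.+1 + \sum_(1 <= j < x.+1) p_down R x j * f (x - j)%N.

Lemma phi_zero j y : (y < j)%N -> phi j y = 0.
Proof. by move=> h; rewrite /phi falling_zero // mul0r. Qed.

Lemma Ephi j d : E (phi j) (j + d) = phi j (j + d).
Proof.
rewrite /E phiU (@big_cat_nat _ _ _ d.+1) //=; last by lia.
rewrite [X in _ + (_ + X)]big_nat_cond [X in _ + (_ + X)]big1; last first.
  move=> k /andP [/andP [h1 h2] _].
  by rewrite phi_zero ?mulr0 //; lia.
rewrite addr0.
rewrite (eq_big_nat _ _ (F2 := fun k => phi j (j + d) * p_down R d k)); last first.
  case=> [//|k] /andP [_ hk].
  set e := (d - k.+1)%N.
  have hd : d = (k.+1 + e)%N by rewrite /e; lia.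
  clearbody e; subst d.
  have -> : (j + (k.+1 + e) - k.+1 = j + e)%N by lia.
  by rewrite addnA phiV.
by rewrite -big_distrr -mulrDr sumP mulr1.
Qed.

Lemma pup_ge0 x : 0 <= p_up R x.
Proof. by rewrite /p_up divr_ge0 ?ler0n. Qed.

Lemma pdown_ge0 x j : 0 <= p_down R x j.
Proof. by rewrite /p_down !mulr_ge0 ?divr_ge0 ?ler0n. Qed.

Lemma E_mono f1 f2 x : (forall y, f1 y <= f2 y) -> E f1 x <= E f2 x.
Proof.
move=> h; rewrite /E lerD //; first by rewrite ler_wpM2l ?pup_ge0.
by apply: ler_sum => j _; rewrite ler_wpM2l ?pdown_ge0.
Qed.

Lemma E_sub f1 f2 x : E (fun y => f1 y - f2 y) x = E f1 x - E f2 x.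
Proof.
rewrite /E (eq_bigr (fun j => p_down R x j * f1 (x - j)%N - p_down R x j * f2 (x - j)%N)).
  by rewrite sumrB; ring.
by move=> j _; rewrite mulrBr.
Qed.

Lemma E_const c x : E (fun _ => c) x = c.
Proof. by rewrite /E -big_distrl /= -mulrDl sumP mul1r. Qed.

Lemma E_le f x B : (forall y, f y <= B) -> E f x <= B.
Proof. by move=> h; rewrite -(E_const B x); apply: E_mono. Qed.

Lemma E_ge f x B : (forall y, B <= f y) -> B <= E f x.
Proof. by move=> h; rewrite -(E_const B x); apply: E_mono. Qed.

Lemma hitS m k x : hit_within R m k.+1 x = if x == m then 1 else E (hit_within R m k) x.
Proof. by []. Qed.

Lemma Eg m x : x != m -> E (phi m.+1) x = phi m.+1 x.
Proof.
move=> hx; case: (ltnP m x) => h.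
  have -> : x = (m.+1 + (x - m.+1))%N by lia.
  by rewrite Ephi.
have h2 : (x < m)%N by rewrite ltn_neqAle hx h.
rewrite /E (@phi_zero m.+1 x) ?(@phi_zero m.+1 x.+1) ?mulr0 ?add0r; try lia.
by rewrite big1 // => j _; rewrite phi_zero ?mulr0 //; lia.
Qed.

Definition rr (a : R) := a / (a + 2^-1).

Lemma phi_prod j y : phi j y = \prod_(i < j) rr (y%:R - i%:R).
Proof.
rewrite /phi /falling -prodf_div; apply: eq_bigr => i _.
by rewrite /rr addrAC.
Qed.

Lemma rr_ge0 a : 0 <= a -> 0 <= rr a.
Proof. by move=> a0; rewrite /rr divr_ge0 //; lra. Qed.

Lemma rr_le1 a : 0 <= a -> rr a <= 1.
Proof. by move=> a0; rewrite /rr ler_pdivrMr; lra. Qed.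

Lemma rr_mono a b : 0 <= a -> a <= b -> rr a <= rr b.
Proof.
move=> a0 ab; rewrite -subr_ge0.
have -> : rr b - rr a = 2^-1 * (b - a) / ((a + 2^-1) * (b + 2^-1)).
  rewrite /rr; field; apply/andP; split; apply: lt0r_neq0; lra.
apply: divr_ge0; first by apply: mulr_ge0; lra.
by apply: mulr_ge0; lra.
Qed.

Lemma rr_low a : 1 <= a -> 1 - rr a <= (a + 1)^-1.
Proof.
move=> a1.
have -> : 1 - rr a = 2^-1 / (a + 2^-1) by rewrite /rr; field; apply: lt0r_neq0; lra.
rewrite -subr_ge0.
have -> : (a + 1)^-1 - 2^-1 / (a + 2^-1) = (2^-1 * a) / ((a + 1) * (a + 2^-1)).
  by field; apply/andP; split; apply: lt0r_neq0; lra.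
by apply: divr_ge0; [lra | apply: mulr_ge0; lra].
Qed.

Lemma phi_ge0 j y : 0 <= phi j y.
Proof.
case: (ltnP y j) => h; first by rewrite phi_zero.
rewrite phi_prod; apply: prodr_ge0 => i _; apply: rr_ge0.
rewrite subr_ge0 ler_nat; have := ltn_ord i; lia.
Qed.

Lemma phi_le1 j y : phi j y <= 1.
Proof.
case: (ltnP y j) => h; first by rewrite phi_zero.
rewrite phi_prod; apply: prodr_ile1 => i _.
have h0 : 0 <= y%:R - i%:R :> R by rewrite subr_ge0 ler_nat; have := ltn_ord i; lia.
by rewrite rr_ge0 ?rr_le1.
Qed.

Lemma phi_mono j L y : (j <= L)%N -> (L <= y)%N -> phi j L <= phi j y.
Proof.
move=> h1 h2; rewrite !phi_prod; apply: ler_prod => i _.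
have h0 : 0 <= L%:R - i%:R :> R by rewrite subr_ge0 ler_nat; have := ltn_ord i; lia.
rewrite rr_ge0 //= rr_mono //; first by rewrite lerD2r ler_nat.
Qed.

Lemma weier n (a : nat -> R) : (forall i, (i < n)%N -> 0 <= a i <= 1) ->
  1 - \sum_(i < n) a i <= \prod_(i < n) (1 - a i).
Proof.
elim: n => [|n IH] ha; first by rewrite big_ord0 big_ord0 subr0.
rewrite big_ord_recr big_ord_recr /=.
have S0 : 0 <= \sum_(i < n) a i.
  by apply: sumr_ge0 => i _; case/andP: (ha i (leqW (ltn_ord i))).
case/andP: (ha n (ltnSn n)) => a0 a1.
have := IH (fun i hi => ha i (leqW hi)).
move: S0; move: (\sum_(i < n) a i) (\prod_(i < n) (1 - a i)) => S P S0 IH2.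
nra.
Qed.

Lemma phi_near1 m N : (0 < N)%N -> 1 - m.+1%:R / N%:R <= phi m.+1 (m + N).
Proof.
move=> hN; rewrite phi_prod.
have hL : forall i, (i < m.+1)%N -> N%:R <= (m + N)%:R - i%:R :> R.
  move=> i hi; rewrite lerBrDr -natrD ler_nat; lia.
have N1 : 1 <= N%:R :> R by rewrite ler1n.
have -> : \prod_(i < m.+1) rr ((m + N)%:R - i%:R) =
   \prod_(i < m.+1) (1 - (1 - rr ((m + N)%:R - i%:R))).
  by apply: eq_bigr => i _; rewrite subKr.
apply: le_trans (weier m.+1 (fun i => 1 - rr ((m + N)%:R - i%:R)) _); last first.
  move=> i hi; have := hL i hi => h.
  rewrite subr_ge0 rr_le1 /=; last lra.
  by rewrite lerBlDr lerDl rr_ge0 //; lra.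
rewrite lerD2l lerN2.
have -> : m.+1%:R / N%:R = \sum_(i < m.+1) (N%:R)^-1 :> R.
  by rewrite sumr_const card_ord mulr_natl.
apply: ler_sum => i _.
have h := hL i (ltn_ord i).
apply: (le_trans (rr_low ((m + N)%:R - i%:R) _)); first lra.
rewrite lef_pV2 ?posrE; lra.
Qed.

Lemma H_ge0 m k x : 0 <= hit_within R m k x.
Proof.
elim: k x => [|k IH] x /=; first by case: eqP.
case: eqP => // _; exact: E_ge.
Qed.

Lemma phim0 m : phi m.+1 m = 0.
Proof. by rewrite phi_zero. Qed.

Lemma H_le m k x : hit_within R m k x <= 1 - phi m.+1 x.
Proof.
elim: k x => [|k IH] x.
  rewrite /=; case: eqP => [->|_]; first by rewrite phim0 subr0.
  by rewrite subr_ge0 phi_le1.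
rewrite hitS; case: eqP => [->|/eqP hx]; first by rewrite phim0 subr0.
have -> : 1 - phi m.+1 x = E (fun y => 1 - phi m.+1 y) x by rewrite E_sub E_const Eg.
exact: E_mono.
Qed.

Fixpoint Sv (m L k x : nat) : R :=
  if (x < L)%N && (x != m) then (if k is k'.+1 then E (Sv m L k') x else 1) else 0.

Lemma Sv_ge0 m L k x : 0 <= Sv m L k x.
Proof.
elim: k x => [|k IH] x /=; first by case: ifP.
by case: ifP => // _; apply: E_ge.
Qed.

Lemma Sv_le1 m L k x : Sv m L k x <= 1.
Proof.
elim: k x => [|k IH] x /=; first by case: ifP.
by case: ifP => // _; apply: E_le.
Qed.

Lemma D_lem m L k x : (m < L)%N ->
  phi m.+1 L - phi m.+1 x - hit_within R m k x <= Sv m L k x.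
Proof.
move=> hmL.
elim: k x => [|k IH] x.
  case: (eqVneq x m) => [->|hxm].
    rewrite /= eqxx andbF phim0 subr0.
    by have := phi_le1 m.+1 L; lra.
  case: (ltnP x L) => hxL.
    rewrite /= hxL hxm (negbTE hxm) /= subr0.
    by have := phi_le1 m.+1 L; have := phi_ge0 m.+1 x; lra.
  rewrite /= (negbTE hxm) ltnNge hxL /=.
  by have := @phi_mono m.+1 L x hmL hxL; have := H_ge0 m 0 x; lra.
case: (eqVneq x m) => [->|hxm].
  rewrite hitS eqxx phim0.
  by have := phi_le1 m.+1 L; have := Sv_ge0 m L k.+1 m; lra.
case: (ltnP x L) => hxL; last first.
  have := @phi_mono m.+1 L x hmL hxL; have := H_ge0 m k.+1 x; have := Sv_ge0 m L k.+1 x; lra.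
rewrite hitS (negbTE hxm) /= hxL hxm /=.
have -> : phi m.+1 L - phi m.+1 x - E (hit_within R m k) x =
   E (fun y => phi m.+1 L - phi m.+1 y - hit_within R m k y) x by rewrite !E_sub E_const Eg.
exact: E_mono.
Qed.

Lemma pup_lb x : 2 / 3 <= p_up R x.
Proof.
rewrite /p_up ler_pdivlMr; last by rewrite ltr0n; lia.
have x0 := ler0n R x.
have -> : (2 / 3 : R) * (3 * x + 3)%:R = 2 * x%:R + 2 by normr; field.
normr. lra.
Qed.

Lemma Sv_out m L k y : (L <= y)%N -> Sv m L k y = 0.
Proof. by move=> h; case: k => [|k] /=; rewrite ltnNge h. Qed.

Lemma Sv_bound m L k B : (forall y, Sv m L k y <= B) -> forall d y, Sv m L (d + k) y <= B.
Proof.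
move=> hB; elim=> [|d IH] y //.
rewrite addSn /=; case: ifP => _; last by have := Sv_ge0 m L k y; have := hB y; lra.
exact: E_le.
Qed.

Lemma q_le1 n : (2 / 3 : R) ^+ n <= 1.
Proof. by apply: exprn_ile1; lra. Qed.

Lemma q_ge0 n : 0 <= (2 / 3 : R) ^+ n.
Proof. by apply: exprn_ge0; lra. Qed.

Lemma Sv_decay m L k B : 0 <= B -> (forall y, Sv m L k y <= B) ->
  forall d y, (L <= y + d)%N -> Sv m L (d + k) y <= B * (1 - (2 / 3) ^+ (L - y)).
Proof.
move=> B0 hB; elim=> [|d IH] y hy.
  rewrite add0n Sv_out; last by lia.
  have -> : (L - y = 0)%N by lia.
  by rewrite expr0 subrr mulr0.
have hpos : 0 <= B * (1 - (2/3) ^+ (L - y)).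
  by apply: mulr_ge0 => //; have := q_le1 (L - y); lra.
rewrite addSn /=; case: ifP => [/andP [hyL hym]|_] //.
rewrite /E.
have h1 : p_up R y * Sv m L (d + k) y.+1 <= p_up R y * (B * (1 - (2/3) ^+ (L - y.+1))).
  by apply: ler_wpM2l; [exact: pup_ge0 | apply: IH; lia].
have h2 : \sum_(1 <= j < y.+1) p_down R y j * Sv m L (d + k) (y - j)
        <= \sum_(1 <= j < y.+1) p_down R y j * B.
  by apply: ler_sum => j _; apply: ler_wpM2l; [exact: pdown_ge0 | exact: Sv_bound].
have h3 : \sum_(1 <= j < y.+1) p_down R y j * B = (1 - p_up R y) * B.
  by rewrite -big_distrl /= -(sumP y) addrAC subrr add0r.
have -> : (L - y = (L - y.+1).+1)%N by lia.
rewrite exprS.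
have hq := pup_lb y.
have Q0 := q_ge0 (L - y.+1).
move: h1 h2 h3 Q0; move: ((2/3 : R) ^+ (L - y.+1)) => Q h1 h2 h3 Q0.
have BQ := mulr_ge0 B0 Q0.
nra.
Qed.

Lemma Sv_geom m L t y : Sv m L (t * L) y <= (1 - (2/3) ^+ L) ^+ t.
Proof.
have r0 : 0 <= 1 - (2/3 : R) ^+ L by have := q_le1 L; lra.
elim: t y => [|t IH] y; first by rewrite mul0n expr0 Sv_le1.
rewrite mulSn.
apply: (le_trans (@Sv_decay m L (t * L) _ (exprn_ge0 t r0) IH L y _)); first by lia.
rewrite exprSr ler_wpM2l ?exprn_ge0 //.
rewrite lerD2l lerN2; apply: ler_wiXn2l; [lra|lra|lia].
Qed.

Lemma Sv_small m L t k y : (t * L <= k)%N -> Sv m L k y <= (1 - (2/3) ^+ L) ^+ t.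
Proof.
move=> h; have -> : k = ((k - t * L) + t * L)%N by lia.
by apply: Sv_bound => z; apply: Sv_geom.
Qed.

Lemma conv m n : (fun k => hit_within R m k n) @ \oo --> (1 - phi m.+1 n).
Proof.
apply/cvgrPdist_le => e e0.
set A := 2 * m.+1%:R / e.
have A0 : 0 <= A by rewrite /A divr_ge0 // ?ltW //; lra.
set N := (Num.Def.archi_bound A).+1.
have hA : A < N%:R.
  apply: (lt_le_trans (archi_boundP A0)); rewrite ler_nat /N; lia.
have hN : (0 < N)%N by rewrite /N.
have hmN : m.+1%:R / N%:R <= e / 2.
  rewrite ler_pdivrMr ?ltr0n //.
  move: hA; rewrite /A ltr_pdivrMr // => hA; nra.
set L := (m + N)%N.
have gL := @phi_near1 m N hN.
have hmL : (m < L)%N by rewrite /L; lia.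
set r := 1 - (2/3 : R) ^+ L.
have q0 : 0 < (2/3 : R) ^+ L by apply: exprn_gt0; lra.
have r0 : 0 <= r by rewrite /r; have := q_le1 L; lra.
have r1 : `|r| < 1 by rewrite ger0_norm //; rewrite /r; lra.
have e20 : 0 < e / 2 by lra.
have := cvg_expr r1.
move/cvgrPdist_le => /(_ _ e20) [t0 _ ht0].
have ht := ht0 t0 (leqnn t0); rewrite /= sub0r normrN ger0_norm ?exprn_ge0 // in ht.
exists (t0 * L)%N => // k /= hk.
have h1 := H_le m k n.
have h2 := @D_lem m L k n hmL.
have h3 := @Sv_small m L t0 k n hk.
rewrite ger0_norm; last by lra.
lra.
Qed.

End S.

Ltac normr := rewrite ?(natrD, natrM, natrX); rewrite -?natr1.

Theorem claim3p3 (R : realType) :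
  (forall m n : nat, (m < n)%N ->
     (fun k => hit_within R m k n) @ \oo -->
       (1 - falling (n%:R) m.+1 / falling (n%:R + 2^-1) m.+1 : R))
  /\ (forall n : nat, (0 < n)%N ->
     (fun k => hit_within R 0 k n) @ \oo --> ((2 * n + 1)%N%:R^-1 : R))
  /\ (exists rho : R, rho < 1 /\ (fun k => return_within R k 0) @ \oo --> (rho : R)).
Proof.
have P2 : forall n : nat, (fun k => hit_within R 0 k n) @ \oo --> ((2 * n + 1)%N%:R^-1 : R).
  move=> n.
  have -> : ((2 * n + 1)%N%:R^-1 : R) = 1 - phi R 1 n.
    rewrite /phi /falling !big_ord1 /= !subr0.
    have n0 := ler0n R n.
    normr. field. apply: lt0r_neq0; lra.
  exact: (conv R 0 n).
split; first by move=> m n _; exact: (conv R m n).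
split; first by move=> n _; exact: P2.
exists ((2 * 1 + 1)%N%:R^-1).
split; first by rewrite invf_lt1 ?ltr0n // ltr1n.
have -> : (fun k => return_within R k 0) = (fun k => hit_within R 0 k 1).
  apply: funext => k; rewrite /return_within big_geq // addr0.
  by rewrite /p_up divff ?mul1r // pnatr_eq0.
exact: P2.
Qed.
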